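(* Let $\Gamma$ be a compact group, let $\Lambda$ be a finite index set, and for each $\lambda\in\Lambda$ let $\rho_\lambda:\Gamma\to O(V_\lambda)$ be a real irreducible orthogonal representation on a space $V_\lambda$ of dimension $d_\lambda$, with $\mathrm{End}_\Gamma(V_\lambda)=\mathbb{R}$. Let $V=\bigoplus_{\lambda}\mathbb{R}^{m_\lambda}\otimes V_\lambda$ and $V'=\bigoplus_\lambda\mathbb{R}^{n_\lambda}\otimes V_\lambda$, with $\Gamma$ acting by $\bigoplus_\lambda I_{m_\lambda}\otimes\rho_\lambda$ and $\bigoplus_\lambda I_{n_\lambda}\otimes\rho_\lambda$ respectively. For matrices $G_\lambda\in\mathbb{R}^{n_\lambda\times m_\lambda}$ let \[ G=\bigoplus_\lambda G_\lambda\otimes I_{V_\lambda} \] (a block-diagonal matrix in a basis adapted to these decompositions), and define $\operatorname{polar}_{\mathrm{block}}(G):=\bigoplus_\lambda\operatorname{polar}(G_\lambda)\otimes I_{V_\lambda}$. Then $\operatorname{polar}_{\mathrm{block}}(G)$ is a $\Gamma$-equivariant linear map $V\to V'$, and it coincides with the ordinary polar factor $\operatorname{polar}(G)$ of the full matrix $G$. Moreover, the same identity holds for the Newton--Schulz iteration in exact arithmetic with a common normalisation: for every integer $k\ge0$ and every scalar $s>0$, \[ T^{k}(G/s)=\bigoplus_\lambda T^{k}(G_\lambda/s)\otimes I_{V_\lambda}, \] and this matrix is again $\Gamma$-equivariant; in particular, taking $s=\|G\|_\mathrm{F}$, $\mathrm{NS}_k(G)$ equals the block-wise iteration applied to each $G_\lambda$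 with the shared normalisation $\|G\|_\mathrm{F}$.
   Context: $O(V_\lambda)$ is the orthogonal group of the inner-product space $V_\lambda$; $\otimes$ denotes the Kronecker/tensor product and $I_{V_\lambda}$ the identity on $V_\lambda$. For a real matrix $M$ with compact singular value decomposition $M=U\Sigma V^\top$ (keeping only nonzero singular values; $U,V$ with orthonormal columns, $\Sigma$ positive diagonal), $\operatorname{polar}(M):=UV^\top$ (with $\operatorname{polar}(0)=0$). Newton--Schulz: fix real $a,b,c$, $p(t)=a+bt+ct^2$ as a matrix polynomial, $T(X):=X\,p(X^\top X)$, $T^k$ its $k$-fold iterate; $\mathrm{NS}_k(M):=T^k(M/\|M\|_\mathrm{F})$ for nonzero $M$, computed in exact arithmetic. *)

(* Defs.v *)
From HB Require Import structures.
From mathcomp Require Import all_boot all_order all_algebra.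
From mathcomp Require Import all_classical all_reals all_analysis.
From mathcomp Require Import mxtens.

Set Implicit Arguments.
Unset Strict Implicit.
Unset Printing Implicit Defensive.

Import Order.TTheory GRing.Theory Num.Theory.
Import numFieldNormedType.Exports.
Local Open Scope ring_scope.
Local Open Scope classical_set_scope.

Definition compact_group (Gam : topologicalType)
  (mul : Gam -> Gam -> Gam) (inv : Gam -> Gam) (e : Gam) : Prop :=
  (forall x y z, mul x (mul y z) = mul (mul x y) z) /\
  (forall x, mul e x = x /\ mul x e = x) /\
  (forall x, mul (inv x) x = e /\ mul x (inv x) = e) /\
  continuous (fun p : Gam * Gam => mul p.1 p.2) /\ continuous inv /\
  compact [set: Gam] /\ hausdorff_space Gam.

Definition orth_rep (R : realType) (Gam : topologicalType)
  (mul : Gam -> Gam -> Gam) (e : Gam) (d : nat) (rho : Gam -> 'M[R]_d) : Prop :=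
  [/\ rho e = 1%:M,
      (forall g h, rho (mul g h) = rho g *m rho h),
      (forall g, rho g *m (rho g)^T = 1%:M) & continuous rho].

(* Irreducibility: V <> 0 and the only subspaces of R^d stable under all rho g *)
(* are 0 and R^d.  A subspace is the row space of U; v |-> rho g v becomes    *)
(* u |-> u *m (rho g)^T on row vectors.                                       *)
Definition irreducible_rep (R : realType) (Gam : Type) (d : nat)
  (rho : Gam -> 'M[R]_d) : Prop :=
  (0 < d)%N /\
  forall U : 'M[R]_d, (forall g, (U *m (rho g)^T <= U)%MS) ->
    U = 0 \/ row_full U.

Definition endo_trivial (R : realType) (Gam : Type) (d : nat)
  (rho : Gam -> 'M[R]_d) : Prop :=
  forall A : 'M[R]_d, (forall g, A *m rho g = rho g *m A) -> exists c : R, A = c%:M.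

Definition blkdiag (R : realType) (L : nat) (p q : 'I_L -> nat)
  (B : forall i, 'M[R]_(p i, q i)) : 'M[R]_(\sum_i p i, \sum_i q i) :=
  \mxblock_(i < L, j < L) (if i == j then conform_mx 0 (B i) else 0).

Definition frob (R : realType) (m n : nat) (M : 'M[R]_(m, n)) : R :=
  Num.sqrt (\sum_(i < m) \sum_(j < n) M i j ^+ 2).

(* P is U V^T for a compact SVD M = U Sigma V^T: U, V with orthonormal        *)
(* columns, Sigma = diag(S) with S positive (r may be 0, giving polar 0 = 0). *)
Definition is_svd_polar (R : realType) (n m : nat) (M P : 'M[R]_(n, m)) : Prop :=
  exists r : nat, exists U : 'M[R]_(n, r), exists S : 'rV[R]_r,
  exists V : 'M[R]_(m, r),
    [/\ U^T *m U = 1%:M, V^T *m V = 1%:M, (forall k, 0 < S 0 k),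
        M = U *m diag_mx S *m V^T & P = U *m V^T].

(* polar(M) := U V^T (choice of an SVD; the result does not depend on it). *)
Definition polar (R : realType) (n m : nat) (M : 'M[R]_(n, m)) : 'M[R]_(n, m) :=
  xget 0 [set P | is_svd_polar M P].

Definition NSstep (R : realType) (a b c : R) {n m : nat} (X : 'M[R]_(n, m))
  : 'M[R]_(n, m) :=
  let A := X^T *m X in
  X *m (a%:M + b *: A + c *: (A *m A)).

(* NS_k(M) = T^k(M / ||M||_F) (meaningful for M <> 0). *)
Definition NS (R : realType) (a b c : R) (k : nat) {n m : nat}
  (M : 'M[R]_(n, m)) : 'M[R]_(n, m) :=
  iter k (NSstep a b c) ((frob M)^-1 *: M).

(* Main.v *)
Require Import Defs.
From HB Require Import structures.
From mathcomp Require Import all_boot all_order all_algebra.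
From mathcomp Require Import all_classical all_reals all_analysis.
From mathcomp Require Import mxtens.
From mathcomp Require Import complex.
Import Order.TTheory GRing.Theory Num.Theory.
Import numFieldNormedType.Exports.
Local Open Scope ring_scope.
Set Implicit Arguments.
Unset Strict Implicit.
Unset Printing Implicit Defensive.
Lemma eq_blkdiag (R : realType) L (p q : 'I_L -> nat) (A B : forall i, 'M[R]_(p i, q i)) :
  (forall i, A i = B i) -> blkdiag A = blkdiag B.
Proof.
move=> H; rewrite /blkdiag; apply/eq_mxblockP => i j.
by case: eqVneq => // <-; rewrite H.
Qed.

Section Blk.
Variable R : realType.
Variable L : nat.

Lemma blkdiag_mul (p q r : 'I_L -> nat) (A : forall i, 'M[R]_(p i, q i))
  (B : forall i, 'M[R]_(q i, r i)) :
  blkdiag A *m blkdiag B = blkdiag (fun i => A i *m B i).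
Proof.
rewrite /blkdiag mul_mxblock; apply/eq_mxblockP => i k.
rewrite (bigD1 i) //= big1 => [|j /negbTE nji]; last first.
  by rewrite eq_sym nji mul0mx.
rewrite eqxx conform_mx_id addr0.
by case: eqVneq => [<-|_]; rewrite ?conform_mx_id ?mulmx0.
Qed.

Lemma blkdiag_tr (p q : 'I_L -> nat) (A : forall i, 'M[R]_(p i, q i)) :
  (blkdiag A)^T = blkdiag (fun i => (A i)^T).
Proof.
rewrite /blkdiag tr_mxblock; apply/eq_mxblockP => i k.
rewrite eq_sym; case: eqVneq => [<-|_]; rewrite ?conform_mx_id ?trmx0 //.
Qed.

Lemma blkdiag_add (p q : 'I_L -> nat) (A B : forall i, 'M[R]_(p i, q i)) :
  blkdiag A + blkdiag B = blkdiag (fun i => A i + B i).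
Proof.
rewrite /blkdiag -mxblockD; apply/eq_mxblockP => i k.
by case: eqVneq => [<-|_]; rewrite ?conform_mx_id ?addr0.
Qed.

Lemma blkdiag_scale (p q : 'I_L -> nat) (a : R) (A : forall i, 'M[R]_(p i, q i)) :
  a *: blkdiag A = blkdiag (fun i => a *: A i).
Proof.
rewrite /blkdiag.
have -> : forall (F : forall i j, 'M[R]_(p i, q j)), a *: mxblock F = mxblock (fun i j => a *: F i j).
  by move=> F; apply/matrixP => s t; rewrite !mxE.
apply/eq_mxblockP => i k.
by case: eqVneq => [<-|_]; rewrite ?conform_mx_id ?scaler0.
Qed.

Lemma blkdiag_scalar (p : 'I_L -> nat) (a : R) :
  blkdiag (fun i => (a%:M : 'M[R]_(p i))) = a%:M.
Proof. exact: mxdiagZ. Qed.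

Lemma NSstep_blk (p q : 'I_L -> nat) (a b c : R) (B : forall i, 'M[R]_(p i, q i)) :
  NSstep a b c (blkdiag B) = blkdiag (fun i => NSstep a b c (B i)).
Proof.
rewrite /NSstep blkdiag_tr !blkdiag_mul -(blkdiag_scalar q a) !blkdiag_scale.
by rewrite !blkdiag_add blkdiag_mul.
Qed.

Lemma iter_NSstep_blk (p q : 'I_L -> nat) (a b c : R) k (B : forall i, 'M[R]_(p i, q i)) :
  iter k (NSstep a b c) (blkdiag B) = blkdiag (fun i => iter k (NSstep a b c) (B i)).
Proof. by elim: k => //= k ->; rewrite NSstep_blk. Qed.

End Blk.

Section Tens.
Variable R : realType.

Lemma tens_addl m n p q (A B : 'M[R]_(m, n)) (C : 'M[R]_(p, q)) :
  (A + B) *t C = A *t C + B *t C.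
Proof. by apply/matrixP => i j; rewrite !mxE mulrDl. Qed.

Lemma tens_scalel m n p q (a : R) (A : 'M[R]_(m, n)) (C : 'M[R]_(p, q)) :
  (a *: A) *t C = a *: (A *t C).
Proof. by apply/matrixP => i j; rewrite !mxE mulrA. Qed.

Lemma tens_scalar1 m d (a : R) :
  (a%:M : 'M[R]_m) *t (1%:M : 'M[R]_d) = a%:M.
Proof.
apply/matrixP => i j.
case: (mxtens_indexP i) => i0 i1; case: (mxtens_indexP j) => j0 j1.
rewrite tensmxE !mxE (inj_eq (can_inj (@mxtens_indexK _ _))) xpair_eqE.
by case: (i0 == j0); case: (i1 == j1); rewrite /= ?mulr1 ?mulr0 ?mul0r.
Qed.

Lemma NSstep_tens m n d (a b c : R) (M : 'M[R]_(m, n)) :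
  NSstep a b c (M *t (1%:M : 'M[R]_d)) = NSstep a b c M *t (1%:M : 'M[R]_d).
Proof.
rewrite /NSstep trmx_tens trmx1 !tensmx_mul !mulmx1.
by rewrite -(tens_scalar1 n d a) -!tens_scalel -!tens_addl tensmx_mul mulmx1.
Qed.

Lemma iter_NSstep_tens m n d (a b c : R) k (M : 'M[R]_(m, n)) :
  iter k (NSstep a b c) (M *t (1%:M : 'M[R]_d)) = iter k (NSstep a b c) M *t (1%:M : 'M[R]_d).
Proof. by elim: k => //= k ->; rewrite NSstep_tens. Qed.

Lemma equiv_tens m n d (X : 'M[R]_(n, m)) (r : 'M[R]_d) :
  (1%:M : 'M[R]_n) *t r *m (X *t 1%:M) = (X *t 1%:M) *m ((1%:M : 'M[R]_m) *t r).
Proof. by rewrite !tensmx_mul mul1mx mulmx1 mul1mx mulmx1. Qed.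

End Tens.

Section SvdBlk.
Variable R : realType.

Definition rowt r d (S : 'rV[R]_r) : 'rV[R]_(r * d) :=
  \row_k S 0 (mxtens_unindex k).1.

Lemma diag_tens r d (S : 'rV[R]_r) :
  diag_mx (rowt d S) = diag_mx S *t (1%:M : 'M[R]_d).
Proof.
apply/matrixP => i j.
case: (mxtens_indexP i) => i0 i1; case: (mxtens_indexP j) => j0 j1.
rewrite tensmxE !mxE mxtens_indexK (inj_eq (can_inj (@mxtens_indexK _ _))) xpair_eqE.
by case: (i0 == j0); case: (i1 == j1); rewrite /= ?mulr1 ?mulr0 ?mul0r ?mulr1n ?mulr0n.
Qed.

Lemma diag_blk L (p : 'I_L -> nat) (S : forall i, 'rV[R]_(p i)) :
  diag_mx (\mxrow_i S i) = blkdiag (fun i => diag_mx (S i)).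
Proof. exact: diag_mxrow. Qed.

Lemma svd_blk L (d m n r : 'I_L -> nat) (U : forall i, 'M[R]_(n i, r i))
  (S : forall i, 'rV[R]_(r i)) (V : forall i, 'M[R]_(m i, r i))
  (Gl : forall i, 'M[R]_(n i, m i)) :
  (forall i, (U i)^T *m U i = 1%:M) -> (forall i, (V i)^T *m V i = 1%:M) ->
  (forall i k, 0 < S i 0 k) -> (forall i, Gl i = U i *m diag_mx (S i) *m (V i)^T) ->
  is_svd_polar (blkdiag (fun i => Gl i *t (1%:M : 'M[R]_(d i))))
               (blkdiag (fun i => (U i *m (V i)^T) *t (1%:M : 'M[R]_(d i)))).
Proof.
move=> HU HV HS HG.
exists (\sum_i (r i * d i))%N.
exists (blkdiag (fun i => U i *t (1%:M : 'M[R]_(d i)))).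
exists (\mxrow_i (rowt (d i) (S i))).
exists (blkdiag (fun i => V i *t (1%:M : 'M[R]_(d i)))).
split.
- rewrite blkdiag_tr blkdiag_mul -(blkdiag_scalar _ 1); apply: eq_blkdiag => i.
  by rewrite trmx_tens tensmx_mul HU trmx1 mulmx1 tens_scalar1.
- rewrite blkdiag_tr blkdiag_mul -(blkdiag_scalar _ 1); apply: eq_blkdiag => i.
  by rewrite trmx_tens tensmx_mul HV trmx1 mulmx1 tens_scalar1.
- by move=> k; rewrite !mxE.
- rewrite diag_blk blkdiag_tr !blkdiag_mul; apply: eq_blkdiag => i.
  by rewrite diag_tens trmx_tens trmx1 !tensmx_mul !mulmx1 HG.
- rewrite blkdiag_tr !blkdiag_mul; apply: eq_blkdiag => i.
  by rewrite trmx_tens trmx1 !tensmx_mul !mulmx1.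
Qed.

End SvdBlk.
Section Uniq.
Variable R : realType.

Definition rinv r (S : 'rV[R]_r) : 'rV[R]_r := \row_k (S 0 k)^-1.

Lemma diag_rinv r (S : 'rV[R]_r) : (forall k, 0 < S 0 k) ->
  diag_mx S *m diag_mx (rinv S) = 1%:M.
Proof.
move=> HS; apply/matrixP => i j; rewrite mul_diag_mx !mxE.
case: eqVneq => [->|]; rewrite ?mulr1n ?mulr0n ?mulr0 //.
by rewrite mulfV // gt_eqF.
Qed.

Lemma diag_rinvC r (S : 'rV[R]_r) : (forall k, 0 < S 0 k) ->
  diag_mx (rinv S) *m diag_mx S = 1%:M.
Proof. by move=> HS; apply: mulmx1C; apply: diag_rinv. Qed.

Lemma diag_comm_inv r1 r2 (S1 : 'rV[R]_r1) (S2 : 'rV[R]_r2) (K : 'M[R]_(r1, r2)) :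
  (forall k, 0 < S1 0 k) -> (forall k, 0 < S2 0 k) ->
  diag_mx S1 *m (diag_mx S1 *m K) = K *m diag_mx S2 *m diag_mx S2 ->
  diag_mx (rinv S1) *m K = K *m diag_mx (rinv S2).
Proof.
move=> HS1 HS2 eqK.
apply/matrixP => a b; move/matrixP: eqK => /(_ a b).
rewrite !mul_diag_mx !mul_mx_diag !mxE.
have Ha := HS1 a; have Hb := HS2 b.
case: (eqVneq (K a b) 0) => [->|Kab]; first by rewrite !mulr0 !mul0r.
move=> h0.
have h : S1 0 a ^+ 2 * K a b = S2 0 b ^+ 2 * K a b.
  by rewrite !expr2 -mulrA h0 -mulrA mulrC.
have : S1 0 a = S2 0 b.
  by apply/eqP; rewrite -(eqrXn2 (n:=2)) ?ltW //; rewrite (mulIf Kab h).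
by move=> ->; rewrite mulrC.
Qed.

Lemma svd_polar_uniq n m (M P1 P2 : 'M[R]_(n, m)) :
  is_svd_polar M P1 -> is_svd_polar M P2 -> P1 = P2.
Proof.
move=> [r1 [U1 [S1 [V1 [HU1 HV1 HS1 HM1 ->]]]]].
move=> [r2 [U2 [S2 [V2 [HU2 HV2 HS2 HM2 ->]]]]].
set D1 := diag_mx S1; set D2 := diag_mx S2.
set E1 := diag_mx (rinv S1); set E2 := diag_mx (rinv S2).
have DE1 : D1 *m E1 = 1%:M by apply: diag_rinv.
have DE2 : D2 *m E2 = 1%:M by apply: diag_rinv.
have ED2 : E2 *m D2 = 1%:M by apply: diag_rinvC.
have MV1 : M *m V1 = U1 *m D1 by rewrite HM1 -mulmxA HV1 mulmx1.
have MV2 : M *m V2 = U2 *m D2 by rewrite HM2 -mulmxA HV2 mulmx1.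
have U1E : U1 = M *m V1 *m E1 by rewrite MV1 -mulmxA DE1 mulmx1.
have U2E : U2 = M *m V2 *m E2 by rewrite MV2 -mulmxA DE2 mulmx1.
have MtM1 : M^T *m M = V1 *m (D1 *m D1) *m V1^T.
  rewrite {1}HM1 !trmx_mul trmxK tr_diag_mx -/D1 HM1.
  rewrite -!mulmxA; congr (_ *m _); rewrite !mulmxA; congr (_ *m _).
  by rewrite -(mulmxA D1) HU1 mulmx1.
have MtM2 : M^T *m M = V2 *m (D2 *m D2) *m V2^T.
  rewrite {1}HM2 !trmx_mul trmxK tr_diag_mx -/D2 HM2.
  rewrite -!mulmxA; congr (_ *m _); rewrite !mulmxA; congr (_ *m _).
  by rewrite -(mulmxA D2) HU2 mulmx1.
set K := V1^T *m V2.
have eqK : D1 *m D1 *m K = K *m (D2 *m D2).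
  have h1 : V1^T *m (M^T *m M) *m V2 = D1 *m D1 *m K.
    by rewrite MtM1 !mulmxA HV1 mul1mx -!mulmxA.
  have h2 : V1^T *m (M^T *m M) *m V2 = K *m (D2 *m D2).
    by rewrite MtM2 -!mulmxA HV2 mulmx1 !mulmxA.
  by rewrite -h1 -h2.
have Kinv : E1 *m K = K *m E2.
  apply: diag_comm_inv => //; by rewrite mulmxA eqK mulmxA.
have V1V2 : V1 *m V1^T *m V2 = V2.
  have h : M^T *m M *m V2 = V2 *m (D2 *m D2) by rewrite MtM2 -mulmxA HV2 mulmx1.
  have h' : V2 = V1 *m (D1 *m D1) *m V1^T *m V2 *m E2 *m E2.
    by rewrite -MtM1 h -!mulmxA (mulmxA D2 E2) DE2 mul1mx DE2 mulmx1.
  rewrite {1}h' !mulmxA -(mulmxA V1 V1^T V1) HV1 mulmx1.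
  by symmetry; rewrite {1}h' !mulmxA.
have MVV2 : M *m V2 *m V2^T = M by rewrite MV2 HM2.
rewrite U1E U2E -{1}MVV2.
have KT : K^T *m E1 = E2 *m K^T.
  by rewrite -[E1]tr_diag_mx -[E2]tr_diag_mx -!trmx_mul Kinv.
rewrite -!mulmxA (mulmxA V2^T); congr (M *m (V2 *m _)).
have KT' : V2^T *m V1 *m E1 = E2 *m V2^T *m V1.
  by move: KT; rewrite /K trmx_mul trmxK mulmxA.
rewrite mulmxA KT' -!mulmxA; congr (E2 *m _).
by apply: trmx_inj; rewrite !trmx_mul !trmxK V1V2.
Qed.

End Uniq.
Section Ortho.
Variable R : realType.

Lemma trZ m n (c : R) (A : 'M[R]_(m, n)) : (c *: A)^T = c *: A^T.
Proof. by apply/matrixP => i j; rewrite !mxE. Qed.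

Lemma rowsq_gt0 N (w : 'rV[R]_N) : w != 0 -> 0 < (w *m w^T) 0 0.
Proof.
move=> Hw; rewrite !mxE lt_neqAle; apply/andP; split; last first.
  by apply: sumr_ge0 => k _; rewrite mxE -expr2 sqr_ge0.
apply: contra Hw => /eqP H; apply/eqP/rowP => k; rewrite mxE.
have Hge : forall j : 'I_N, true -> 0 <= w 0 j * w^T j 0.
  by move=> j _; rewrite mxE -expr2 sqr_ge0.
have := psumr_eq0P (i:=k) Hge (esym H) isT.
by rewrite mxE -expr2 => /eqP; rewrite sqrf_eq0 => /eqP.
Qed.

Lemma normalize N (w : 'rV[R]_N) : w != 0 ->
  exists c : R, (c *: w) *m (c *: w)^T = 1%:M.
Proof.
move=> Hw; have Hs := rowsq_gt0 Hw.
set s := (w *m w^T) 0 0 in Hs *.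
have e : w *m w^T = s%:M by rewrite {1}[w *m w^T]mx11_scalar.
exists (Num.sqrt s)^-1.
rewrite trZ -scalemxAl -scalemxAr scalerA e scale_scalar_mx.
congr (_%:M); rewrite -expr2 exprVn sqr_sqrtr ?ltW // mulVf //.
by rewrite gt_eqF.
Qed.

Lemma rank_orth k N (U : 'M[R]_(k, N)) : U *m U^T = 1%:M -> \rank U = k.
Proof.
move=> HU; apply/eqP; rewrite eqn_leq rank_leq_row /=.
by rewrite -{1}(mxrank1 R k) -HU mxrankM_maxl.
Qed.

Lemma ortho_complete N : forall t k (U : 'M[R]_(k, N)), (N - k)%N = t ->
  U *m U^T = 1%:M ->
  exists j, exists W : 'M[R]_(j, N), [/\ W *m W^T = 1%:M, W *m U^T = 0 & (k + j)%N = N].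
Proof.
move=> t; elim: t => [|t IH] k U Ht HU.
  have kN : (k <= N)%N by rewrite -(rank_orth HU) rank_leq_col.
  exists 0%N, 0; split; [by apply/matrixP => -[] | by apply/matrixP => -[] |].
  by rewrite addn0; apply/eqP; rewrite eqn_leq kN -subn_eq0 Ht.
have kN : (k < N)%N by rewrite -subn_gt0 Ht.
set K := kermx U^T.
have rK : \rank K = (N - k)%N by rewrite mxrank_ker mxrank_tr rank_orth.
have Kn0 : K != 0 by rewrite -mxrank_eq0 rK Ht.
set w := nz_row K.
have wn0 : w != 0 by rewrite nz_row_eq0.
have wU : w *m U^T = 0.
  by have /submxP [D wD] := nz_row_sub K; rewrite /w wD -mulmxA mulmx_ker mulmx0.
have [c Hc] := normalize wn0.
set v := c *: w in Hc.
have vU : v *m U^T = 0 by rewrite /v -scalemxAl wU scaler0.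
have Uv : U *m v^T = 0 by rewrite -[U]trmxK -trmx_mul vU trmx0.
have HU' : col_mx U v *m (col_mx U v)^T = 1%:M.
  by rewrite tr_col_mx mul_col_row HU Hc vU Uv -scalar_mx_block.
have Ht' : (N - (k + 1))%N = t by rewrite subnDA Ht subn1.
have [j [W [HW1 HW2 HW3]]] := IH _ _ Ht' HU'.
move: HW2; rewrite tr_col_mx mul_mx_row => /eqP; rewrite row_mx_eq0.
case/andP => /eqP WU /eqP Wv.
have vW : v *m W^T = 0 by rewrite -[v]trmxK -trmx_mul Wv trmx0.
exists (1 + j)%N, (col_mx v W); split.
- by rewrite tr_col_mx mul_col_row Hc HW1 vW Wv -scalar_mx_block.
- by rewrite mul_col_mx vU WU col_mx0.
- by rewrite addnA.
Qed.

Lemma sym_real_eigen n (A : 'M[R]_n.+1) : A^T = A -> exists x, eigenvalue A x.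
Proof.
move=> Asym.
pose f := real_complex R.
pose AC := map_mx f A.
have ACh : AC \is hermsymmx.
  apply: realsym_hermsym.
    apply/is_hermitianmxP; rewrite expr0 scale1r.
    by apply/matrixP => i j; rewrite !mxE /=; congr f; rewrite -{1}Asym mxE.
  by apply/mxOverP => i j; rewrite mxE; apply/complex_realP; exists (A i j).
have /hermitian_normalmx/orthomx_spectralP ACe := ACh.
have spr := hermitian_spectral_diag_real ACh.
set P := spectralmx AC in ACe; set sp := spectral_diag AC in ACe spr.
have Pu : P \in unitmx by apply: spectral_unit.
have ev : eigenvalue AC (sp 0 0).
  apply/eigenvalueP; exists (row 0 P).
    rewrite -row_mul {1}ACe !mulmxA mulmxV // mul1mx row_mul.
    by rewrite -row_mul mul_diag_mx; apply/rowP => j; rewrite !mxE.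
  apply/negP => /eqP h.
  have : row 0 (P *m invmx P) = 0 by rewrite row_mul h mul0mx.
  rewrite mulmxV // => /rowP /(_ 0); rewrite !mxE eqxx /= => /eqP.
  by rewrite oner_eq0.
have /complex_realP [x hx] : sp 0 0 \is Num.real by apply: (mxOverP spr).
exists x; move: ev; rewrite hx !eigenvalue_root_char.
by rewrite -map_char_poly fmorph_root.
Qed.


Lemma real_spectral n (A : 'M[R]_n) : A^T = A ->
  exists Q : 'M[R]_n, exists D : 'rV[R]_n,
    Q^T *m Q = 1%:M /\ A = Q *m diag_mx D *m Q^T.
Proof.
elim: n A => [|n IH] A Asym.
  exists 1%:M, 0; split; first by rewrite trmx1 mulmx1.
  by apply/matrixP => -[].
have [x ev] := sym_real_eigen Asym.
have [w0 Hw0 w0n0] := eigenvalueP ev.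
have [c Hc] := normalize w0n0.
set v := c *: w0 in Hc.
have vA : v *m A = x *: v by rewrite /v -scalemxAl Hw0 !scalerA mulrC.
have [j [W [HW1 HWv Hj]]] := ortho_complete (erefl (n.+1 - 1)%N) Hc.
have ej : j = n by move: Hj; rewrite add1n => -[].
subst j.
have vW : v *m W^T = 0 by rewrite -[v]trmxK -trmx_mul HWv trmx0.
pose P := col_mx v W.
have PPt : P *m P^T = 1%:M.
  by rewrite /P tr_col_mx mul_col_row Hc HW1 vW HWv -scalar_mx_block.
have PtP : P^T *m P = 1%:M by apply: mulmx1C.
pose B := W *m A *m W^T.
have Bsym : B^T = B by rewrite /B !trmx_mul trmxK Asym mulmxA.
have [Q' [D' [HQ' HB]]] := IH B Bsym.
pose Qb := block_mx (1%:M : 'M[R]_1) 0 0 Q'.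
exists (P^T *m Qb), (row_mx (x%:M : 'rV[R]_1) D').
split.
  rewrite trmx_mul trmxK mulmxA -(mulmxA Qb^T) PPt mulmx1 /Qb tr_block_mx !trmx0 trmx1.
  apply: (etrans (@mulmx_block _ 1 n 1 n 1 n _ _ _ _ _ _ _ _)).
  rewrite !mul0mx !mulmx0 !addr0 !add0r mulmx1 HQ'.
  exact: (esym (scalar_mx_block _ _ _)).
have key : Qb *m diag_mx (row_mx (x%:M : 'rV[R]_1) D') *m Qb^T = P *m A *m P^T.
  have dx : diag_mx (x%:M : 'rV[R]_1) = x%:M.
    by apply/matrixP => i j; rewrite !ord1 !mxE.
  rewrite diag_mx_row dx /Qb tr_block_mx !trmx0 trmx1.
  rewrite !mulmx_block !mul0mx !mulmx0 !addr0 !add0r !mulmx1 !mul1mx -HB.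
  rewrite /P tr_col_mx mul_col_mx mul_col_row vA /B.
  have WAv : W *m A *m v^T = 0.
    by rewrite -mulmxA -{1}Asym -trmx_mul vA trZ -scalemxAr HWv scaler0.
  by rewrite WAv mul0mx -(scalemxAl x v v^T) -(scalemxAl x v W^T) Hc vW scaler0 scalemx1.
rewrite trmx_mul trmxK.
transitivity (P^T *m (P *m A *m P^T) *m P).
  by rewrite !mulmxA PtP mul1mx -mulmxA PtP mulmx1.
by rewrite -key !mulmxA.
Qed.

End Ortho.
Section SvdEx.
Variable R : realType.

Lemma svd_ex n m (M : 'M[R]_(n, m)) :
  exists r, exists U : 'M[R]_(n, r), exists S : 'rV[R]_r, exists V : 'M[R]_(m, r),
    [/\ U^T *m U = 1%:M, V^T *m V = 1%:M, (forall k, 0 < S 0 k)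
      & M = U *m diag_mx S *m V^T].
Proof.
have Asym : (M^T *m M)^T = M^T *m M by rewrite trmx_mul trmxK.
have [Q [D [HQ HA]]] := real_spectral Asym.
have QQt : Q *m Q^T = 1%:M by apply: mulmx1C.
have [X HX] : {X : 'M[R]_(n, m) | X = M *m Q} by eexists.
have XtX : X^T *m X = diag_mx D.
  by rewrite HX trmx_mul -mulmxA (mulmxA M^T) HA !mulmxA HQ mul1mx -mulmxA HQ mulmx1.
have Dk : forall k, D 0 k = \sum_a X a k ^+ 2.
  move=> k; have := congr1 (fun N : 'M[R]_m => N k k) XtX; rewrite !mxE eqxx mulr1n => <-.
  by apply: eq_bigr => a _; rewrite mxE expr2.
have Dge0 : forall k, 0 <= D 0 k.
  by move=> k; rewrite Dk; apply: sumr_ge0 => a _; apply: sqr_ge0.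
pose Spos : {set 'I_m} := [set k | D 0 k != 0].
pose f : 'I_#|Spos| -> 'I_m := enum_val.
have fP : forall j, D 0 (f j) != 0.
  by move=> j; have := enum_valP j; rewrite inE.
have finj : injective f := @enum_val_inj _ _.
pose E : 'M[R]_(m, #|Spos|) := \matrix_(k, j) (k == f j)%:R.
have EtE : E^T *m E = 1%:M.
  apply/matrixP => j j'; rewrite !mxE (bigD1 (f j)) //= big1 => [|k nk].
    by rewrite !mxE eqxx mul1r addr0 (inj_eq finj).
  by rewrite !mxE (negbTE nk) mul0r.
pose S : 'rV[R]_#|Spos| := \row_j Num.sqrt (D 0 (f j)).
have Spos' : forall j, 0 < S 0 j.
  by move=> j; rewrite mxE sqrtr_gt0 lt_neqAle eq_sym fP Dge0.
pose V := Q *m E.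
pose U := X *m E *m diag_mx (rinv S).
have EtDE : E^T *m diag_mx D *m E = diag_mx (\row_j D 0 (f j)).
  rewrite mul_mx_diag; apply/matrixP => j j'.
  rewrite !mxE (bigD1 (f j)) //= big1 => [|k nk]; last first.
    by rewrite !mxE (negbTE nk) !mul0r.
  rewrite !mxE eqxx (inj_eq finj) mul1r addr0.
  by case: eqP => _; rewrite ?mulr1 ?mulr0 ?mulr1n ?mulr0n.
have XE : X *m E = \matrix_(a, j) X a (f j).
  apply/matrixP => a j; rewrite !mxE (bigD1 (f j)) //= big1 => [|k nk].
    by rewrite !mxE eqxx mulr1 addr0.
  by rewrite !mxE (negbTE nk) mulr0.
have XEE : X *m E *m E^T = X.
  rewrite XE; apply/matrixP => a k; rewrite !mxE.
  case: (boolP (k \in Spos)) => Hk.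
    set j0 := enum_rank_in Hk k.
    have fj0 : f j0 = k := enum_rankK_in Hk Hk.
    rewrite (bigD1 j0) //= big1 => [|j nj]; first by rewrite !mxE fj0 eqxx mulr1 addr0.
    by rewrite !mxE -fj0 (inj_eq finj) eq_sym (negbTE nj) mulr0.
  rewrite big1 => [|j _]; last first.
    have nk : k != f j by apply: contraNneq Hk => ->; apply: enum_valP.
    by rewrite !mxE (negbTE nk) mulr0.
  have D0 : D 0 k = 0 by apply/eqP; move: Hk; rewrite inE negbK.
  have Hge : forall a : 'I_n, true -> 0 <= X a k ^+ 2 by move=> ? _; apply: sqr_ge0.
  have := psumr_eq0P (i:=a) Hge (etrans (esym (Dk k)) D0) isT.
  by move/eqP; rewrite sqrf_eq0 => /eqP ->.
exists #|Spos|, U, S, V; split => //.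
- have -> : U^T *m U = diag_mx (rinv S) *m (E^T *m (X^T *m X) *m E) *m diag_mx (rinv S).
    by rewrite /U !trmx_mul tr_diag_mx !mulmxA.
  rewrite XtX EtDE; apply/matrixP => i j; rewrite mul_mx_diag mul_diag_mx !mxE.
  case: (eqVneq i j) => [<-|nij]; last by rewrite !mulr0n mulr0 mul0r.
  rewrite !mulr1n mulrC mulrA -expr2 exprVn sqr_sqrtr ?Dge0 // mulVf //.
- by rewrite /V trmx_mul -mulmxA (mulmxA Q^T) HQ mul1mx EtE.
- rewrite /U /V trmx_mul -(mulmxA (X *m E)) diag_rinvC // mulmx1 mulmxA XEE.
  by rewrite HX -mulmxA QQt mulmx1.
Qed.

End SvdEx.

Section PolarBlk.
Variable R : realType.

Lemma polarE n m (M P : 'M[R]_(n, m)) : is_svd_polar M P -> polar M = P.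
Proof.
move=> H; rewrite /polar.
have := @xgetPex _ 0 [set P | is_svd_polar M P] (ex_intro _ P H).
by move=> H'; apply: (svd_polar_uniq H' H).
Qed.

Lemma polar_blk L (d m n : 'I_L -> nat) (Gl : forall i, 'M[R]_(n i, m i)) :
  polar (blkdiag (fun i => Gl i *t (1%:M : 'M[R]_(d i))))
  = blkdiag (fun i => polar (Gl i) *t (1%:M : 'M[R]_(d i))).
Proof.
have H : forall i, exists x : {r : nat & ('M[R]_(n i, r) * 'rV[R]_r * 'M[R]_(m i, r))%type},
    [/\ (projT2 x).1.1^T *m (projT2 x).1.1 = 1%:M,
        (projT2 x).2^T *m (projT2 x).2 = 1%:M,
        (forall k, 0 < (projT2 x).1.2 0 k)
      & Gl i = (projT2 x).1.1 *m diag_mx (projT2 x).1.2 *m (projT2 x).2^T].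
  move=> i; have [r [U [S [V HUSV]]]] := svd_ex (Gl i).
  by exists (existT _ r (U, S, V)).
pose X i := projT1 (cid (H i)).
have HX : forall i, _ := fun i => projT2 (cid (H i)).
pose r i := projT1 (X i).
pose U i : 'M[R]_(n i, r i) := (projT2 (X i)).1.1.
pose S i : 'rV[R]_(r i) := (projT2 (X i)).1.2.
pose V i : 'M[R]_(m i, r i) := (projT2 (X i)).2.
have HU : forall i, (U i)^T *m U i = 1%:M by move=> i; case: (HX i).
have HV : forall i, (V i)^T *m V i = 1%:M by move=> i; case: (HX i).
have HS : forall i k, 0 < S i 0 k by move=> i; case: (HX i).
have HG : forall i, Gl i = U i *m diag_mx (S i) *m (V i)^T by move=> i; case: (HX i).
rewrite (polarE (svd_blk d HU HV HS HG)).
apply: eq_blkdiag => i; congr (_ *t _); symmetry; apply: polarE.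
by exists (r i), (U i), (S i), (V i); split.
Qed.

End PolarBlk.
Lemma sumsq_eq0 (R : realType) m n (M : 'M[R]_(m, n)) :
  \sum_(i < m) \sum_(j < n) M i j ^+ 2 = 0 -> M = 0.
Proof.
move=> H; apply/matrixP => i j; rewrite mxE.
have H1 := psumr_eq0P (fun i _ => sumr_ge0 _ (fun j _ => sqr_ge0 (M i j))) H.
have H2 := psumr_eq0P (fun j _ => sqr_ge0 (M i j)) (H1 i isT).
by apply/eqP; rewrite -sqrf_eq0; apply/eqP; apply: H2.
Qed.

Lemma frob_gt0 (R : realType) m n (M : 'M[R]_(m, n)) : M != 0 -> 0 < frob M.
Proof.
move=> HM; rewrite /frob sqrtr_gt0 lt_neqAle; apply/andP; split.
  by apply: contra HM => /eqP H; apply/eqP; apply: sumsq_eq0; rewrite -H.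
by apply: sumr_ge0 => i _; apply: sumr_ge0 => j _; apply: sqr_ge0.
Qed.

Theorem mainTheorem2 (R : realType) (Gam : topologicalType)
  (mul : Gam -> Gam -> Gam) (inv : Gam -> Gam) (e : Gam)
  (HGam : compact_group mul inv e)
  (L : nat) (d m n : 'I_L -> nat)
  (rho : forall i : 'I_L, Gam -> 'M[R]_(d i))
  (Hrep : forall i, orth_rep mul e (rho i))
  (Hirr : forall i, irreducible_rep (rho i))
  (Hend : forall i, endo_trivial (rho i))
  (Gl : forall i : 'I_L, 'M[R]_(n i, m i)) :
  let G := blkdiag (fun i => Gl i *t (1%:M : 'M[R]_(d i))) in
  let rhoV := fun g => blkdiag (fun i => (1%:M : 'M[R]_(m i)) *t rho i g) in
  let rhoV' := fun g => blkdiag (fun i => (1%:M : 'M[R]_(n i)) *t rho i g) in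
  let Pblock := blkdiag (fun i => polar (Gl i) *t (1%:M : 'M[R]_(d i))) in
  [/\ (forall g, rhoV' g *m Pblock = Pblock *m rhoV g),
      polar G = Pblock,
      (forall (a b c : R) (k : nat) (s : R), 0 < s ->
         iter k (NSstep a b c) (s^-1 *: G)
           = blkdiag (fun i => iter k (NSstep a b c) (s^-1 *: Gl i)
                                 *t (1%:M : 'M[R]_(d i)))
         /\ (forall g, rhoV' g *m iter k (NSstep a b c) (s^-1 *: G)
                       = iter k (NSstep a b c) (s^-1 *: G) *m rhoV g))
    & (forall (a b c : R) (k : nat), G != 0 ->
         NS a b c k G
           = blkdiag (fun i => iter k (NSstep a b c) ((frob G)^-1 *: Gl i)
                                 *t (1%:M : 'M[R]_(d i))))].
Proof.
move=> G rhoV rhoV' Pblock.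
have equiv : forall (X : forall i, 'M[R]_(n i, m i)) g,
    rhoV' g *m blkdiag (fun i => X i *t (1%:M : 'M[R]_(d i)))
    = blkdiag (fun i => X i *t (1%:M : 'M[R]_(d i))) *m rhoV g.
  move=> X g; rewrite /rhoV /rhoV' !blkdiag_mul; apply: eq_blkdiag => i.
  exact: equiv_tens.
have part3 : forall (a b c : R) (k : nat) (s : R),
    iter k (NSstep a b c) (s^-1 *: G)
      = blkdiag (fun i => iter k (NSstep a b c) (s^-1 *: Gl i) *t (1%:M : 'M[R]_(d i))).
  move=> a b c k s; rewrite /G blkdiag_scale.
  under eq_blkdiag do rewrite -tens_scalel.
  rewrite iter_NSstep_blk; apply: eq_blkdiag => i.
  exact: iter_NSstep_tens.
split.
- by move=> g; apply: equiv.
- exact: polar_blk.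
- move=> a b c k s _; split; first exact: part3.
  by move=> g; rewrite part3; apply: equiv.
- by move=> a b c k _; rewrite /NS part3.
Qed.
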